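(* For all integers $n,r\ge 1$, the diameter of $G(n,r)$ equals $(n-1)r$.
   Context: For integers $n,r\ge 1$, $G(n,r)$ is the simple undirected graph whose vertices are the $n\times n$ matrices with non-negative integer entries all of whose row sums and column sums equal $r$. Let $e_{ij}$ be the $n\times n$ matrix with a $1$ in position $(i,j)$ and $0$ elsewhere, and let $\mathcal{B}=\{\pm(e_{ij}+e_{kl}-e_{il}-e_{kj}) : 1\le i<k\le n,\ 1\le j<l\le n\}$. Two vertices $u,v$ are adjacent iff $u-v\in\mathcal{B}$. The diameter is the maximum over pairs of vertices of the shortest-path distance. *)

(* Defs.v *)
From HB Require Import structures.
From mathcomp Require Import all_boot all_order all_algebra.
Set Implicit Arguments. Unset Strict Implicit. Unset Printing Implicit Defensive.
Import GRing.Theory Num.Theory.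

Definition is_vertex (n r : nat) (A : 'M[nat]_n) : Prop :=
  (forall i : 'I_n, (\sum_(j < n) A i j)%N = r) /\
  (forall j : 'I_n, (\sum_(i < n) A i j)%N = r).

Definition mx_int (n : nat) (A : 'M[nat]_n) : 'M[int]_n :=
  \matrix_(i, j) (Posz (A i j)).

Definition basic_move (n : nat) (i j k l : 'I_n) : 'M[int]_n :=
  (delta_mx i j + delta_mx k l - delta_mx i l - delta_mx k j)%R.

Definition adj (n : nat) (u v : 'M[nat]_n) : Prop :=
  exists (i k j l : 'I_n), (i < k)%N /\ (j < l)%N /\
    ((mx_int u - mx_int v = basic_move i j k l)%R \/
     (mx_int u - mx_int v = - basic_move i j k l)%R).

Inductive walk (n r : nat) : nat -> 'M[nat]_n -> 'M[nat]_n -> Prop :=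
| walk0 (u : 'M[nat]_n) : @is_vertex n r u -> @walk n r 0%N u u
| walkS (d : nat) (u v w : 'M[nat]_n) :
    @is_vertex n r u -> @adj n u v -> @walk n r d v w -> @walk n r d.+1 u w.

Definition is_dist (n r : nat) (u v : 'M[nat]_n) (d : nat) : Prop :=
  @walk n r d u v /\ (forall k, @walk n r k u v -> (d <= k)%N).

Definition is_diameter (n r : nat) (D : nat) : Prop :=
  (forall u v : 'M[nat]_n, is_vertex r u -> is_vertex r v ->
     exists d, is_dist r u v d /\ (d <= D)%N) /\
  (exists u v : 'M[nat]_n, is_vertex r u /\ is_vertex r v /\ is_dist r u v D).

(* Main.v *)
Require Import Defs.
From mathcomp Require Import all_boot all_order all_algebra.
From mathcomp Require Import zify.
From Stdlib Require Import Classical.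
Set Implicit Arguments. Unset Strict Implicit. Unset Printing Implicit Defensive.
Import GRing.Theory Num.Theory.

Section S.
Variables (n r : nat).

Lemma walk_cat d1 d2 (u v w : 'M[nat]_n) :
  walk r d1 u v -> walk r d2 v w -> walk r (d1 + d2) u w.
Proof.
elim=> [x _ h|d0 x y z hx hxy _ IH h] //=.
by rewrite addSn; apply: walkS hx hxy (IH h).
Qed.

Lemma walk_vtx d (u v : 'M[nat]_n) : walk r d u v -> is_vertex r u /\ is_vertex r v.
Proof. by elim=> [x hx|d0 x y z hx _ _ [_ ?]]. Qed.

Lemma sum_ind_l (c : bool) (j : 'I_n) :
  (\sum_(b < n) nat_of_bool (c && (b == j)) = c)%N.
Proof.
rewrite (bigD1 j) //= eqxx andbT big1 ?addn0 // => b /negbTE ->.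
by rewrite andbF.
Qed.

Lemma sum_ind_r (c : bool) (j : 'I_n) :
  (\sum_(b < n) nat_of_bool ((b == j) && c) = c)%N.
Proof.
under eq_bigr do rewrite andbC. exact: sum_ind_l.
Qed.

Definition mv (u : 'M[nat]_n) (i j k l : 'I_n) : 'M[nat]_n :=
  \matrix_(a, b) (if a == i then (if b == j then (u a b - 1)%N else if b == l then (u a b).+1 else u a b)
                 else if a == k then (if b == j then (u a b).+1 else if b == l then (u a b - 1)%N else u a b)
                 else u a b).

Lemma mv_pt (u : 'M[nat]_n) (i j k l : 'I_n) a b :
  i != k -> j != l -> (0 < u i j)%N -> (0 < u k l)%N ->
  (mv u i j k l a b + ((a == i) && (b == j)) + ((a == k) && (b == l)) =
   u a b + ((a == i) && (b == l)) + ((a == k) && (b == j)))%N.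
Proof.
move=> ik jl hij hkl; rewrite mxE.
case: (eqVneq a i) => [->|ai]; case: (eqVneq b j) => [->|bj] //=.
- by rewrite (negbTE jl) (negbTE ik) /=; lia.
- case: (eqVneq b l) => [->|bl] /=; rewrite (negbTE ik) /=; lia.
- case: (eqVneq a k) => [->|ak] /=; rewrite ?(negbTE jl) /=; lia.
- case: (eqVneq a k) => [->|ak] /=; case: (eqVneq b l) => [->|bl] /=; lia.
Qed.

Lemma mv_vertex (u : 'M[nat]_n) (i j k l : 'I_n) :
  is_vertex r u -> i != k -> j != l -> (0 < u i j)%N -> (0 < u k l)%N ->
  is_vertex r (mv u i j k l).
Proof.
move=> [hr hc] ik jl hij hkl; split.
- move=> a; apply/eqP; rewrite -(eqn_add2r ((a == i) + (a == k))) addnA.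
  rewrite -{1}(sum_ind_l (a == i) j) -{1}(sum_ind_l (a == k) l) -!big_split /=.
  rewrite (eq_bigr _ (fun b _ => mv_pt a b ik jl hij hkl)) !big_split /=.
  by rewrite !sum_ind_l hr addnA.
- move=> b; apply/eqP; rewrite -(eqn_add2r ((b == j) + (b == l))) addnA.
  rewrite -{1}(sum_ind_r (b == j) i) -{1}(sum_ind_r (b == l) k) -!big_split /=.
  rewrite (eq_bigr _ (fun a _ => mv_pt a b ik jl hij hkl)) !big_split /=.
  rewrite !sum_ind_r hc; lia.
Qed.

Lemma mv_diff (u : 'M[nat]_n) (i j k l : 'I_n) :
  i != k -> j != l -> (0 < u i j)%N -> (0 < u k l)%N ->
  (mx_int u - mx_int (mv u i j k l) = basic_move i j k l)%R.
Proof.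
move=> ik jl hij hkl; apply/matrixP => a b.
have := mv_pt a b ik jl hij hkl.
rewrite /basic_move !mxE.
move: ((a == i) && (b == j)) ((a == k) && (b == l)) ((a == i) && (b == l)) ((a == k) && (b == j)).
move=> [] [] [] [] /=; lia.
Qed.

Lemma mv_adj (u : 'M[nat]_n) (i j k l : 'I_n) :
  (i < k)%N -> j != l -> (0 < u i j)%N -> (0 < u k l)%N ->
  adj u (mv u i j k l).
Proof.
move=> ik jl hij hkl.
have ik' : i != k by rewrite neq_ltn ik.
rewrite /adj; case: (ltngtP j l) => [jl'|lj|e]; last by move: jl; rewrite (val_inj e) eqxx.
- exists i, k, j, l; do 2 split => //; left; exact: mv_diff.
- exists i, k, l, j; do 2 split => //; right; rewrite mv_diff //.
  rewrite /basic_move; apply/matrixP => a b; rewrite !mxE; lia.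
Qed.

Lemma trunc_sym (u v : 'M[nat]_n) (i : 'I_n) :
  is_vertex r u -> is_vertex r v ->
  (\sum_b (u i b - v i b) = \sum_b (v i b - u i b))%N.
Proof.
move=> [hu _] [hv _]; apply/eqP; rewrite -(eqn_add2r r).
rewrite -{1}(hv i) -{1}(hu i) -!big_split /=; apply/eqP/eq_bigr => b _; lia.
Qed.

Lemma sum0P (F : 'I_n -> nat) : (\sum_b F b = 0)%N -> forall b, F b = 0%N.
Proof. by move=> h b; apply/eqP; move/eqP: h; rewrite sum_nat_eq0 => /forallP /(_ b). Qed.

Lemma sumposP (F : 'I_n -> nat) e : (\sum_b F b = e.+1)%N -> exists b, F b != 0%N.
Proof.
move=> h; case: (boolP [exists b, F b != 0%N]) => [/existsP//|].
rewrite negb_exists => /forallP hb; move: h; rewrite big1 // => b _.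
by apply/eqP; have := hb b; rewrite negbK.
Qed.

Lemma fix_row (i : 'I_n) e : forall u v, is_vertex r u -> is_vertex r v ->
  (forall a b : 'I_n, (a < i)%N -> u a b = v a b) ->
  (\sum_b (u i b - v i b))%N = e ->
  exists w d, (d <= e)%N /\ walk r d u w /\
     (forall a b : 'I_n, (a <= i)%N -> w a b = v a b).
Proof.
elim: e => [|e IH] u v hu hv hlt hs.
  exists u, 0%N; split => //; split; first exact: walk0.
  move=> a b; rewrite leq_eqVlt => /orP [/eqP ai|]; last exact: hlt.
  have e1 : a = i by apply: val_inj.
  subst a.
  have h1 := sum0P hs b.
  have h2 := sum0P (etrans (esym (trunc_sym i hu hv)) hs) b.
  move: h1 h2; lia.
have [j hj] := sumposP hs.
have [l hl] := sumposP (etrans (esym (trunc_sym i hu hv)) hs).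
have hj' : (v i j < u i j)%N by move: hj; lia.
have hl' : (u i l < v i l)%N by move: hl; lia.
have jl : j != l by apply/eqP => e1; subst l; lia.
case: (boolP [exists k : 'I_n, (i < k)%N && (v k l < u k l)%N]); last first.
  rewrite negb_exists => /forallP hk.
  have : (\sum_(a < n | a != i) u a l <= \sum_(a < n | a != i) v a l)%N.
    apply: leq_sum => a ai; case: (ltngtP a i) => [h|h|h].
    - by rewrite hlt.
    - by have := hk a; rewrite h /=; lia.
    - by move: ai; rewrite (val_inj h) eqxx.
  case: hu => _ hu; case: hv => _ hv.
  have h1 := hu l; have h2 := hv l.
  rewrite (bigD1 i) //= in h1; rewrite (bigD1 i) //= in h2.
  move=> h; have := leq_add hl' h; by rewrite addSn h1 h2 ltnn.
move=> /existsP [k /andP [ik hk]].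
have ik' : i != k by rewrite neq_ltn ik.
have hij : (0 < u i j)%N by lia.
have hkl : (0 < u k l)%N by lia.
have hlt' : forall a b : 'I_n, (a < i)%N -> mv u i j k l a b = v a b.
  move=> a b h; rewrite mxE; have -> : (a == i) = false by apply/negbTE; rewrite neq_ltn h.
  have -> : (a == k) = false by apply/negbTE; rewrite neq_ltn (ltn_trans h ik).
  exact: hlt.
have hs' : (\sum_b (mv u i j k l i b - v i b))%N = e.
  have pt : forall b, (mv u i j k l i b - v i b + nat_of_bool (b == j) = u i b - v i b)%N.
    move=> b; rewrite mxE eqxx /=; case: (eqVneq b j) => [->|bj] /=; first lia.
    by case: (eqVneq b l) => [->|bl] //=; lia.
  have s1 : (\sum_b nat_of_bool (b == j) = 1)%N := sum_ind_l true j.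
  apply/eqP; rewrite -(eqn_add2r (\sum_b nat_of_bool (b == j))) -big_split /=.
  by rewrite (eq_bigr _ (fun b _ => pt b)) hs s1 addn1.
have [w [d [hd [hw hwv]]]] := IH (mv u i j k l) v (mv_vertex hu ik' jl hij hkl) hv hlt' hs'.
exists w, d.+1; split => //; split => //.
exact: walkS hu (mv_adj ik jl hij hkl) hw.
Qed.

Lemma outer t : forall (i : nat) (u v : 'M[nat]_n), (i + t)%N = n.-1 ->
  (forall a b : 'I_n, (a < i)%N -> u a b = v a b) ->
  is_vertex r u -> is_vertex r v -> exists d, (d <= t * r)%N /\ walk r d u v.
Proof.
elim: t => [|t IH] i u v hit hlt hu hv.
  exists 0%N; split => //.
  suff -> : u = v by exact: walk0.
  apply/matrixP => a b; rewrite addn0 in hit.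
  case: (ltnP a i) => hai; first exact: hlt.
  case: hu => _ hu; case: hv => _ hv.
  have h1 := hu b; have h2 := hv b.
  rewrite (bigD1 a) //= in h1; rewrite (bigD1 a) //= in h2.
  rewrite (eq_bigr (fun a' => v a' b)) in h1; last first.
    move=> a' ha'; apply: hlt.
    have := ltn_ord a'; have := ltn_ord a; move: ha'; rewrite -val_eqE /=.
    move=> /eqP; lia.
  lia.
have hi : (i < n)%N by lia.
set io := Ordinal hi.
have [w [d1 [hd1 [hw1 hwv]]]] := fix_row (i := io) hu hv hlt (erefl (\sum_b (u io b - v io b))%N).
have [_ hw] := walk_vtx hw1.
have [d2 [hd2 hw2]] := IH i.+1 w v (etrans (addSnnS i t) hit) (fun a b h => hwv a b h) hw hv.
exists (d1 + d2)%N; split; last exact: walk_cat hw1 hw2.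
have : (\sum_b (u io b - v io b) <= r)%N.
  case: hu => hu _; rewrite -(hu io); apply: leq_sum => b _; exact: leq_subr.
rewrite mulSn; lia.
Qed.

Lemma min_walk (u v : 'M[nat]_n) m : forall k, (k <= m)%N -> walk r k u v ->
  exists d, walk r d u v /\ (forall k, walk r k u v -> (d <= k)%N).
Proof.
elim: m => [|m IH] k hk hw.
  exists k; split => // k' _; move: hk; lia.
case: (classic (exists k', (k' < k)%N /\ walk r k' u v)) => [[k' [hk' hw']]|hno].
  apply: (IH k') => //; lia.
exists k; split => // k' hw'; case: (ltnP k' k) => // h; exfalso; apply: hno; by exists k'.
Qed.

End S.
Section L.
Variables (n r : nat).
Local Open Scope ring_scope.

Definition Phi (M : 'M[int]_n) : int :=
  \sum_(a < n) \sum_(b < n) (((b <= a)%N)%:R * M a b).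

Lemma PhiD (A B : 'M[int]_n) : Phi (A + B) = Phi A + Phi B.
Proof.
rewrite /Phi -big_split; apply: eq_bigr => a _; rewrite -big_split.
by apply: eq_bigr => b _; rewrite mxE mulrDr.
Qed.

Lemma PhiN (A : 'M[int]_n) : Phi (- A) = - Phi A.
Proof.
rewrite /Phi -sumrN; apply: eq_bigr => a _; rewrite -sumrN.
by apply: eq_bigr => b _; rewrite mxE mulrN.
Qed.

Lemma PhiB (A B : 'M[int]_n) : Phi (A - B) = Phi A - Phi B.
Proof. by rewrite PhiD PhiN. Qed.

Lemma Phi_delta (p q : 'I_n) : Phi (delta_mx p q) = ((q <= p)%N)%:R.
Proof.
rewrite /Phi (bigD1 p) //= [X in _ + X]big1 ?addr0; last first.
  move=> a ap; apply: big1 => b _; rewrite mxE.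
  by rewrite (negbTE ap) /= mulr0.
rewrite (bigD1 q) //= [X in _ + X]big1 ?addr0; last first.
  by move=> b bq; rewrite mxE (negbTE bq) andbF mulr0.
by rewrite mxE !eqxx mulr1.
Qed.

Lemma Phi_move (i j k l : 'I_n) : (i < k)%N -> (j < l)%N ->
  Phi (basic_move i j k l) <= 1 /\ - Phi (basic_move i j k l) <= 1.
Proof.
move=> ik jl; rewrite /basic_move !PhiB PhiD !Phi_delta.
case: (leqP j i); case: (leqP l k); case: (leqP l i); case: (leqP j k);
  move=> /= *; lia.
Qed.

Lemma adj_Phi (u w : 'M[nat]_n) : adj u w -> Phi (mx_int u) <= Phi (mx_int w) + 1.
Proof.
move=> [i [k [j [l [ik [jl [e|e]]]]]]].
- have := Phi_move ik jl; rewrite -e PhiB => -[h _]; lia.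
- have := Phi_move ik jl; rewrite -[basic_move _ _ _ _]opprK -e PhiN PhiB => -[_ h]; lia.
Qed.

Lemma walk_Phi d (u v : 'M[nat]_n) : walk r d u v -> Phi (mx_int u) <= Phi (mx_int v) + d%:Z.
Proof.
elim=> [x _|d0 x y z _ hxy _ IH]; first by rewrite addr0.
have := adj_Phi hxy; lia.
Qed.

Lemma sum_if_l (c : 'I_n) (x : nat) : (\sum_(b < n) (if b == c then x else 0) = x)%N.
Proof.
rewrite (bigD1 c) //= eqxx big1 ?addn0 // => b /negbTE -> //.
Qed.

Lemma sum_if_r (c : 'I_n) (x : nat) : (\sum_(b < n) (if c == b then x else 0) = x)%N.
Proof. under eq_bigr do rewrite eq_sym. exact: sum_if_l. Qed.

Definition u0 : 'M[nat]_n := \matrix_(a, b) (if a == b then r else 0%N).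
Definition v0 : 'M[nat]_n := \matrix_(a, b) (if b == ordS a then r else 0%N).

Lemma u0_vtx : is_vertex r u0.
Proof.
split => [a|b]; under eq_bigr do rewrite mxE.
- exact: sum_if_r.
- exact: sum_if_l.
Qed.

Lemma v0_vtx : is_vertex r v0.
Proof.
split => [a|b]; under eq_bigr do rewrite mxE.
- exact: sum_if_l.
- have := reindex_inj (op := addn) (x := 0%N) (P := xpredT) (F := fun c => if b == c then r else 0%N) (@ordS_inj n).
  by rewrite /= sum_if_r => <-.
Qed.

Lemma Phi_u0 : Phi (mx_int u0) = (n * r)%N%:Z.
Proof.
rewrite /Phi (eq_bigr (fun _ => r%:Z)); first by rewrite sumr_const card_ord; lia.
move=> a _; rewrite (bigD1 a) //= [X in _ + X]big1 ?addr0; last first.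
  by move=> b ba; rewrite !mxE eq_sym (negbTE ba) mulr0.
by rewrite !mxE !eqxx leqnn mul1r.
Qed.

End L.

Local Open Scope ring_scope.
Lemma Phi_v0 (m r : nat) : Phi (mx_int (v0 m.+1 r)) = r%:Z.
Proof.
have inner : forall a : 'I_m.+1, \sum_(b < m.+1) (((b <= a)%N)%:R * mx_int (v0 m.+1 r) a b)
   = (((ordS a <= a)%N)%:R * r%:Z)%R.
  move=> a; rewrite (bigD1 (ordS a)) //= [X in (_ + X)%R]big1 ?addr0; last first.
    by move=> b ba; rewrite !mxE (negbTE ba) mulr0.
  by rewrite !mxE eqxx.
rewrite /Phi (eq_bigr _ (fun a _ => inner a)) big_ord_recr /= big1 ?add0r; last first.
  move=> a _; rewrite /= modn_small ?ltnS // ltnn mul0r //.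
by rewrite modnn leq0n mul1r.
Qed.

Theorem proposition2p10 (n r : nat) (hn : (1 <= n)%N) (hr : (1 <= r)%N) :
  is_diameter n r ((n - 1) * r)%N.
Proof.
have up : forall u v : 'M[nat]_n, is_vertex r u -> is_vertex r v ->
    exists d, (d <= (n - 1) * r)%N /\ walk r d u v.
  move=> u v hu hv; apply: (@outer n r (n - 1) 0%N u v) => //; lia.
split.
- move=> u v hu hv; have [d0 [hd0 hw0]] := up u v hu hv.
  have [d [hd hmin]] := min_walk (leqnn d0) hw0.
  exists d; split; first by split.
  have := hmin d0 hw0; lia.
- case: n hn up => [//|m] _ up.
  have lower : forall k, walk r k (u0 m.+1 r) (v0 m.+1 r) -> ((m.+1 - 1) * r <= k)%N.
    move=> k hw; have := walk_Phi hw; rewrite Phi_u0 Phi_v0 subn1 /= mulSn; lia.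
  exists (u0 m.+1 r), (v0 m.+1 r); split; first exact: u0_vtx.
  split; first exact: v0_vtx.
  have [d [hd hw]] := up _ _ (u0_vtx m.+1 r) (v0_vtx m.+1 r).
  have -> : ((m.+1 - 1) * r)%N = d by apply/eqP; rewrite eqn_leq hd lower.
  split => // k hk; rewrite -(eqP (_ : (m.+1 - 1) * r == d)%N) ?lower //.
  by apply/eqP; apply/eqP; rewrite eqn_leq hd lower.
Qed.
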